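(* Let $f\in C[0,1]$ satisfy $f(x)\neq0$ for all $x\in[0,1]$. Then for every $n\in\mathbb{N}$, $\overline{\dim}_B G(f^n)=\overline{\dim}_B G(f)$, $\underline{\dim}_B G(f^n)=\underline{\dim}_B G(f)$, $\dim_P G(f^n)=\dim_P G(f)$, $\dim_H G(f^n)=\dim_H G(f)$, and $\dim_A G(f^n)=\dim_A G(f)$.
   Context: $C[0,1]$ is the space of real-valued continuous functions on $[0,1]$; $G(f)=\{(x,f(x)):x\in[0,1]\}\subset\mathbb{R}^2$ is the graph of $f$, and $f^n$ is the pointwise $n$-th power. $\overline{\dim}_B$, $\underline{\dim}_B$, $\dim_P$, $\dim_H$, $\dim_A$ denote the upper box-counting, lower box-counting, packing, Hausdorff and Assouad dimensions of subsets of $\mathbb{R}^2$ (with the Euclidean metric). *)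

(* Defs.v *)
From HB Require Import structures.
From mathcomp Require Import all_boot all_order all_algebra.
From mathcomp Require Import all_classical all_reals all_analysis.
Set Implicit Arguments. Unset Strict Implicit. Unset Printing Implicit Defensive.
Import Order.TTheory GRing.Theory Num.Theory.
Local Open Scope classical_set_scope.
Local Open Scope ring_scope.

Section FractalDims.
Variable R : realType.

Definition edist (p q : R * R) : R :=
  Num.sqrt ((p.1 - q.1) ^+ 2 + (p.2 - q.2) ^+ 2).

(* diameter of a set (in \bar R; -oo for the empty set) *)
Definition ediam (U : set (R * R)) : \bar R :=
  ereal_sup [set (edist p q)%:E | p in U & q in U].

Definition cball2 (x : R * R) (r : R) : set (R * R) := [set y | edist x y <= r].

Definition graph01 (f : R -> R) : set (R * R) :=
  [set p | 0 <= p.1 <= 1 /\ p.2 = f p.1].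

(* N_delta(F): smallest number of sets of diameter at most delta covering F
   (+oo if there is no finite such cover). *)
Definition covnum (delta : R) (F : set (R * R)) : \bar R :=
  ereal_inf [set (k%:R)%:E | k in [set k : nat | exists U : 'I_k -> set (R * R),
     (forall i, (ediam (U i) <= delta%:E)%E) /\ F `<=` \bigcup_i U i]].

Definition box_ratio (delta : R) (F : set (R * R)) : \bar R :=
  match covnum delta F with
  | r%:E => (ln r / - ln delta)%:E
  | _ => +oo%E
  end.

Definition upper_box_dim (F : set (R * R)) : \bar R :=
  ereal_inf [set ereal_sup [set box_ratio d F | d in [set d | 0 < d < e]]
            | e in [set e : R | 0 < e]].

Definition lower_box_dim (F : set (R * R)) : \bar R :=
  ereal_sup [set ereal_inf [set box_ratio d F | d in [set d | 0 < d < e]]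
            | e in [set e : R | 0 < e]].

Definition diam_pow (s : R) (U : set (R * R)) : \bar R :=
  if `[< U = set0 >] then 0%E else
  match ediam U with
  | r%:E => (powR r s)%:E
  | _ => +oo%E
  end.

Definition hausdorff_delta (s delta : R) (F : set (R * R)) : \bar R :=
  ereal_inf [set (\sum_(i <oo) diam_pow s (U i))%E
            | U in [set U : nat -> set (R * R) |
                (forall i, (ediam (U i) <= delta%:E)%E) /\ F `<=` \bigcup_i U i]].

Definition hausdorff_measure (s : R) (F : set (R * R)) : \bar R :=
  ereal_sup [set hausdorff_delta s d F | d in [set d : R | 0 < d]].

Definition hausdorff_dim (F : set (R * R)) : \bar R :=
  ereal_inf [set s%:E | s in [set s : R | 0 <= s /\ hausdorff_measure s F = 0%E]].

(* Packing measure: delta-packings are countable (indexed by J : set nat)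
   pairwise disjoint families of closed balls B(x_i, r_i) with x_i in F and
   0 < r_i <= delta; |B(x_i,r_i)| = 2 r_i. *)
Definition packing_delta (s delta : R) (F : set (R * R)) : \bar R :=
  ereal_sup [set (\sum_(i <oo) (if `[< P.1 i >] then (powR (2 * P.2 i) s)%:E else 0))%E
            | P in [set P : set nat * (nat -> R) | exists x : nat -> R * R,
                 (forall i, P.1 i -> F (x i) /\ 0 < P.2 i <= delta) /\
                 (forall i j, P.1 i -> P.1 j -> i <> j ->
                    cball2 (x i) (P.2 i) `&` cball2 (x j) (P.2 j) = set0)]].

Definition packing_premeasure (s : R) (F : set (R * R)) : \bar R :=
  ereal_inf [set packing_delta s d F | d in [set d : R | 0 < d]].

Definition packing_measure (s : R) (F : set (R * R)) : \bar R :=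
  ereal_inf [set (\sum_(i <oo) packing_premeasure s (Fi i))%E
            | Fi in [set Fi : nat -> set (R * R) | F `<=` \bigcup_i Fi i]].

Definition packing_dim (F : set (R * R)) : \bar R :=
  ereal_inf [set s%:E | s in [set s : R | 0 <= s /\ packing_measure s F = 0%E]].

Definition assouad_dim (F : set (R * R)) : \bar R :=
  ereal_inf [set a%:E | a in [set a : R | 0 <= a /\ exists C : R, 0 < C /\
     forall r Rr : R, 0 < r -> r < Rr -> forall x, F x ->
       (covnum r (cball2 x Rr `&` F) <= (C * powR (Rr / r) a)%:E)%E]].

End FractalDims.

(* Main.v *)
Require Import Defs.
From HB Require Import structures.
From mathcomp Require Import all_boot all_order all_algebra.
From mathcomp Require Import all_classical all_reals all_analysis.
From mathcomp Require Import ring lra.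
Import Order.TTheory GRing.Theory Num.Theory.
Import numFieldNormedType.Exports.
Notation edist := Defs.edist.
Set Implicit Arguments. Unset Strict Implicit.
Local Open Scope classical_set_scope.
Local Open Scope ring_scope.

Lemma edist_ge0 (R : realType) (p q : R * R) : 0 <= edist p q.
Proof. exact: sqrtr_ge0. Qed.

Lemma edist_sym (R : realType) (p q : R * R) : edist p q = edist q p.
Proof. by rewrite /edist -(sqrrN (p.1 - q.1)) -(sqrrN (p.2 - q.2)) !opprB. Qed.

Lemma edist_tri (R : realType) (p q r : R * R) :
  edist p r <= edist p q + edist q r.
Proof.
rewrite /edist.
set a1 := p.1 - q.1; set a2 := p.2 - q.2; set b1 := q.1 - r.1; set b2 := q.2 - r.2.
have -> : p.1 - r.1 = a1 + b1 by rewrite /a1 /b1; ring.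
have -> : p.2 - r.2 = a2 + b2 by rewrite /a2 /b2; ring.
set X := Num.sqrt (a1 ^+ 2 + a2 ^+ 2); set Y := Num.sqrt (b1 ^+ 2 + b2 ^+ 2).
have X0 : 0 <= X by exact: sqrtr_ge0.
have Y0 : 0 <= Y by exact: sqrtr_ge0.
have XX : X ^+ 2 = a1 ^+ 2 + a2 ^+ 2 by rewrite sqr_sqrtr // addr_ge0 // sqr_ge0.
have YY : Y ^+ 2 = b1 ^+ 2 + b2 ^+ 2 by rewrite sqr_sqrtr // addr_ge0 // sqr_ge0.
rewrite -(ger0_norm (addr_ge0 X0 Y0)) -sqrtr_sqr ler_sqrt; last by rewrite sqr_ge0.
have cs : (a1 * b1 + a2 * b2) <= X * Y.
  have h : (a1 * b1 + a2 * b2) ^+ 2 <= (X * Y) ^+ 2.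
    rewrite exprMn XX YY.
    have := sqr_ge0 (a1 * b2 - a2 * b1).
    move=> hh; nra.
  have XY0 : 0 <= X * Y by exact: mulr_ge0.
  case: (lerP (a1 * b1 + a2 * b2) 0) => c; first exact: le_trans c XY0.
  by rewrite -(ler_pXn2r (n:=2)) // ?nnegrE ?ltW.
nra.
Qed.

Lemma edist_scal (R : realType) (p q u v : R * R) (c : R) :
  u.1 - v.1 = c * (p.1 - q.1) -> u.2 - v.2 = c * (p.2 - q.2) ->
  edist u v = `|c| * edist p q.
Proof.
move=> h1 h2; rewrite /edist h1 h2 !exprMn -mulrDr sqrtrM ?sqr_ge0 //.
by rewrite sqrtr_sqr.
Qed.

Lemma ball_meet (R : realType) (p q : R * R) (r1 r2 : R) :
  0 < r1 -> 0 < r2 -> edist p q <= r1 + r2 ->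
  exists z, cball2 p r1 z /\ cball2 q r2 z.
Proof.
move=> r10 r20 hd.
set t := r1 / (r1 + r2).
have s0 : 0 < r1 + r2 by rewrite addr_gt0.
have t0 : 0 <= t by rewrite divr_ge0 // ltW.
have t1 : 0 <= 1 - t.
  rewrite subr_ge0 /t ler_pdivrMr // mul1r lerDl ltW //.
exists (p.1 + t * (q.1 - p.1), p.2 + t * (q.2 - p.2)); split; rewrite /cball2 /=.
- rewrite (@edist_scal _ p q _ _ t) /=; [|ring|ring].
  rewrite ger0_norm // /t -ler_pdivlMl; last by rewrite divr_gt0.
  by rewrite invf_div divfK ?gt_eqF.
- rewrite (@edist_scal _ q p _ _ (1 - t)) /=; [|ring|ring].
  rewrite ger0_norm //.
  have -> : 1 - t = r2 / (r1 + r2) by rewrite /t; field; rewrite gt_eqF.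
  rewrite -ler_pdivlMl; last by rewrite divr_gt0.
  by rewrite invf_div divfK ?gt_eqF // (edist_sym q p).
Qed.

Lemma ball_disj (R : realType) (p q : R * R) (r1 r2 : R) :
  r1 + r2 < edist p q -> cball2 p r1 `&` cball2 q r2 = set0.
Proof.
move=> h; apply/seteqP; split => // z [/= h1 h2].
have := edist_tri p z q; rewrite (edist_sym z q).
move=> h3; have : edist p q <= r1 + r2 by apply: le_trans h3 _; exact: lerD.
by rewrite leNgt h.
Qed.

Local Open Scope ereal_scope.

Lemma ediam_img (R : realType) (phi : R * R -> R * R) (L : R) (U A : set (R * R)) :
  (0 <= L)%R ->
  (forall p q, A p -> A q -> (edist (phi p) (phi q) <= L * edist p q)%R) ->
  ediam (phi @` (U `&` A)) <= L%:E * ediam U.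
Proof.
move=> L0 hL; apply: ge_ereal_sup => _ [a [p [Up Ap] <-] [b [q [Uq Aq] <-] <-]].
apply: (@le_trans _ _ (L * edist p q)%:E); first by rewrite lee_fin hL.
rewrite EFinM; apply: lee_wpmul2l; first by rewrite lee_fin.
by apply: ereal_sup_ubound; exists p => //; exists q.
Qed.

Lemma covnum_img (R : realType) (phi : R * R -> R * R) (L d : R) (A B : set (R * R)) :
  (0 < L)%R ->
  (forall p q, A p -> A q -> (edist (phi p) (phi q) <= L * edist p q)%R) ->
  B `<=` phi @` A -> covnum d B <= covnum (d / L) A.
Proof.
move=> L0 hL hB; apply: ereal_inf_le_tmp; apply: image_subset => k [U [hU hc]].
exists (fun i => phi @` (U i `&` A)); split.
  move=> i; apply: le_trans (@ediam_img _ phi L (U i) A (ltW L0) hL) _.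
  apply: (@le_trans _ _ (L%:E * (d / L)%:E)).
    by apply: lee_wpmul2l => //; rewrite lee_fin ltW.
  by rewrite -EFinM mulrC divfK // gt_eqF.
move=> q /hB [p Ap <-]; have [i _ Uip] := hc p Ap.
by exists i => //; exists p.
Qed.

Lemma edist_self (R : realType) (p : R * R) : edist p p = 0%R.
Proof. by rewrite /edist !subrr expr0n /= addr0 sqrtr0. Qed.

Lemma ediam_ge0 (R : realType) (U : set (R * R)) p : U p -> 0 <= ediam U.
Proof.
move=> Up; apply: ereal_sup_ubound; exists p => //; exists p => //.
by rewrite edist_self.
Qed.

Lemma diam_pow_ge0 (R : realType) s (U : set (R * R)) : 0 <= diam_pow s U.
Proof.
rewrite /diam_pow; case: asboolP => // _; case: (ediam U) => // r.
by rewrite lee_fin powR_ge0.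
Qed.

Lemma diam_pow_img (R : realType) (phi : R * R -> R * R) (L s : R) (U A : set (R * R)) :
  (0 < L)%R -> (0 <= s)%R ->
  (forall p q, A p -> A q -> (edist (phi p) (phi q) <= L * edist p q)%R) ->
  diam_pow s (phi @` (U `&` A)) <= (powR L s)%:E * diam_pow s U.
Proof.
move=> L0 s0 hL.
have hD := @ediam_img _ phi L U A (ltW L0) hL.
rewrite {1}/diam_pow; case: asboolP => [_|V0].
  by apply: mule_ge0; [rewrite lee_fin powR_ge0 | exact: diam_pow_ge0].
have [q0 [p0 [Up0 Ap0] _]] : exists q, (phi @` (U `&` A)) q.
  by apply/set0P/eqP.
have U0 : U <> set0 by move=> U0; rewrite U0 in Up0.
have Vge0 : 0 <= ediam (phi @` (U `&` A)).
  by apply: (@ediam_ge0 _ _ (phi p0)); exists p0.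
rewrite /diam_pow; case: asboolP => // _.
move: hD Vge0; case: (ediam U) => [r| |] hD Vge0.
- move: hD Vge0; case: (ediam (phi @` (U `&` A))) => [r'| |] hD Vge0 //.
  rewrite -EFinM lee_fin; move: hD; rewrite -EFinM lee_fin => hD.
  rewrite lee_fin in Vge0.
  have r0 : (0 <= r)%R.
    by rewrite -(pmulr_rge0 _ L0); apply: le_trans hD.
  rewrite -powRM ?(ltW L0) //; apply: ge0_ler_powR => //; rewrite nnegrE //.
  exact: mulr_ge0 (ltW L0) r0.
- by rewrite gt0_muley ?leey // lte_fin powR_gt0.
- by move: (le_trans Vge0 hD); rewrite gt0_muleNy ?lte_fin.
Qed.

Lemma hdelta_img (R : realType) (phi : R * R -> R * R) (L s d : R) (A B : set (R * R)) :
  (0 < L)%R -> (0 <= s)%R ->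
  (forall p q, A p -> A q -> (edist (phi p) (phi q) <= L * edist p q)%R) ->
  B `<=` phi @` A ->
  hausdorff_delta s d B <= (powR L s)%:E * hausdorff_delta s (d / L) A.
Proof.
move=> L0 s0 hL hB; rewrite /hausdorff_delta -ereal_inf_pZl ?powR_gt0 //.
apply: le_ereal_inf_tmp => _ [_ [U [hU hc] <-] <-].
apply: ge_ereal_inf; exists (\sum_(i <oo) diam_pow s (phi @` (U i `&` A))).
  exists (fun i => phi @` (U i `&` A)) => //; split.
    move=> i; apply: le_trans (@ediam_img _ phi L (U i) A (ltW L0) hL) _.
    apply: (@le_trans _ _ (L%:E * (d / L)%:E)).
      by apply: lee_wpmul2l => //; rewrite lee_fin ltW.
    by rewrite -EFinM mulrC divfK // gt_eqF.
  move=> q /hB [p Ap <-]; have [i _ Uip] := hc p Ap.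
  by exists i => //; exists p.
rewrite -nneseriesZl; last by move=> i _; exact: diam_pow_ge0.
apply: lee_nneseries; first by move=> i _ _; exact: diam_pow_ge0.
by move=> i _; exact: diam_pow_img.
Qed.

Lemma hdelta_ge0 (R : realType) (s d : R) (A : set (R * R)) :
  0 <= hausdorff_delta s d A.
Proof.
apply: le_ereal_inf_tmp => _ [U _ <-].
by apply: nneseries_ge0 => i _ _; exact: diam_pow_ge0.
Qed.

Lemma hdim_le (R : realType) (phi : R * R -> R * R) (L : R) (F G : set (R * R)) :
  (0 < L)%R ->
  (forall p q, F p -> F q -> (edist (phi p) (phi q) <= L * edist p q)%R) ->
  G `<=` phi @` F -> hausdorff_dim G <= hausdorff_dim F.
Proof.
move=> L0 hL hG; apply: ereal_inf_le_tmp; apply: image_subset => s [s0 hs].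
split => //; apply/eqP; rewrite eq_le; apply/andP; split.
  apply: ge_ereal_sup => _ [d /= d0 <-].
  apply: le_trans (@hdelta_img _ phi L s d F G L0 s0 hL hG) _.
  rewrite -(mule0 (powR L s)%:E); apply: lee_wpmul2l; first by rewrite lee_fin powR_ge0.
  rewrite -hs; apply: ereal_sup_ubound; exists (d / L)%R => //=.
  by rewrite divr_gt0.
apply: (@le_trans _ _ (hausdorff_delta s 1 G)); first exact: hdelta_ge0.
by apply: ereal_sup_ubound; exists 1%R => //=.
Qed.

Lemma pdelta_img (R : realType) (phi : R * R -> R * R) (L s d : R) (A B : set (R * R)) :
  (0 < L)%R -> (0 <= s)%R ->
  (forall p q, A p -> A q -> (edist (phi p) (phi q) <= L * edist p q)%R) ->
  B `<=` phi @` A ->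
  packing_delta s d B <= (powR L s)%:E * packing_delta s (d / L) A.
Proof.
move=> L0 s0 hL hB; rewrite /packing_delta -ereal_sup_pZl ?powR_gt0 //.
apply: ge_ereal_sup => _ [[J r] [y [/= hy hdisj]] <-].
have /boolp.choice [x hx] : forall i, exists p, J i -> A p /\ phi p = y i.
  move=> i; have [Ji|nJi] := pselect (J i).
    by have [p Ap <-] := hB _ (hy i Ji).1; exists p.
  by exists (y i).
apply: ereal_sup_ubound; exists (\sum_(i <oo)
   (if `[< J i >] then (powR (2 * (r i / L)) s)%:E else 0)).
  exists (J, fun i => r i / L)%R => //; exists x; split => /=.
    move=> i Ji; have [[Byi /andP[ri0 rid]] [Axi _]] := (hy i Ji, hx i Ji).
    split => //; apply/andP; split; first by rewrite divr_gt0.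
    by rewrite ler_pM2r // invr_gt0.
  move=> i j Ji Jj ij; apply: ball_disj; rewrite ltNge; apply/negP => hle.
  have [ri0 _] := andP (hy i Ji).2; have [rj0 _] := andP (hy j Jj).2.
  have hyy : (edist (y i) (y j) <= r i + r j)%R.
    rewrite -(hx i Ji).2 -(hx j Jj).2; apply: le_trans (hL _ _ (hx i Ji).1 (hx j Jj).1) _.
    by rewrite -ler_pdivlMl // mulrC mulrDl.
  have [z [zi zj]] := ball_meet ri0 rj0 hyy.
  have : (cball2 (y i) (r i) `&` cball2 (y j) (r j)) z by [].
  by rewrite hdisj.
rewrite -nneseriesZl; last first.
  by move=> i _; case: asboolP => _ //; rewrite lee_fin powR_ge0.
congr (limn _); apply/funext => n; apply: eq_bigr => i _.
case: asboolP => Ji; last by rewrite mule0.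
have [ri0 _] := andP (hy i Ji).2.
rewrite -EFinM -powRM ?(ltW L0) //; last by rewrite mulr_ge0 // divr_ge0 // ltW.
by rewrite (mulrCA L 2%R) (mulrC L) divfK ?gt_eqF.
Qed.

Lemma pdelta_ge0 (R : realType) (s d : R) (A : set (R * R)) :
  0 <= packing_delta s d A.
Proof.
apply: ereal_sup_ubound; exists (set0, fun _ => 0%R).
  by exists (fun _ => (0, 0)%R); split => // i.
by rewrite eseries0 // => i _ _ /=; case: asboolP.
Qed.

Lemma pdelta_mono (R : realType) (s d : R) (A1 A2 : set (R * R)) :
  A1 `<=` A2 -> packing_delta s d A1 <= packing_delta s d A2.
Proof.
move=> h; apply: ereal_sup_le; apply: image_subset => P [x [h1 h2]].
exists x; split => // i Pi; have [? ?] := h1 i Pi; split => //; exact: h.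
Qed.

Lemma ppre_ge0 (R : realType) (s : R) (A : set (R * R)) :
  0 <= packing_premeasure s A.
Proof. by apply: le_ereal_inf_tmp => _ [d _ <-]; exact: pdelta_ge0. Qed.

Lemma ppre_mono (R : realType) (s : R) (A1 A2 : set (R * R)) :
  A1 `<=` A2 -> packing_premeasure s A1 <= packing_premeasure s A2.
Proof.
move=> h; apply: le_ereal_inf_tmp => _ [d d0 <-].
apply: ge_ereal_inf; exists (packing_delta s d A1); first by exists d.
exact: pdelta_mono.
Qed.

Lemma ppre_img (R : realType) (phi : R * R -> R * R) (L s : R) (A B : set (R * R)) :
  (0 < L)%R -> (0 <= s)%R ->
  (forall p q, A p -> A q -> (edist (phi p) (phi q) <= L * edist p q)%R) ->
  B `<=` phi @` A ->
  packing_premeasure s B <= (powR L s)%:E * packing_premeasure s A.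
Proof.
move=> L0 s0 hL hB; rewrite /packing_premeasure -ereal_inf_pZl ?powR_gt0 //.
apply: le_ereal_inf_tmp => _ [_ [d /= d0 <-] <-].
apply: ge_ereal_inf; exists (packing_delta s (L * d)%R B).
  by exists (L * d)%R => //=; rewrite mulr_gt0.
have := @pdelta_img _ phi L s (L * d)%R A B L0 s0 hL hB.
by rewrite mulrC mulfK // gt_eqF.
Qed.

Lemma pmeas_ge0 (R : realType) (s : R) (A : set (R * R)) :
  0 <= packing_measure s A.
Proof.
apply: le_ereal_inf_tmp => _ [Fi _ <-].
by apply: nneseries_ge0 => i _ _; exact: ppre_ge0.
Qed.

Lemma pdim_le (R : realType) (phi : R * R -> R * R) (L : R) (F G : set (R * R)) :
  (0 < L)%R ->
  (forall p q, F p -> F q -> (edist (phi p) (phi q) <= L * edist p q)%R) ->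
  G `<=` phi @` F -> packing_dim G <= packing_dim F.
Proof.
move=> L0 hL hG; apply: ereal_inf_le_tmp; apply: image_subset => s [s0 hs].
split => //; apply/eqP; rewrite eq_le pmeas_ge0 andbT.
have : packing_measure s G <= (powR L s)%:E * packing_measure s F.
  rewrite /packing_measure -ereal_inf_pZl ?powR_gt0 //.
  apply: le_ereal_inf_tmp => _ [_ [Fi /= hFi <-] <-].
  apply: ge_ereal_inf; exists (\sum_(i <oo) packing_premeasure s (phi @` (Fi i `&` F))).
    exists (fun i => phi @` (Fi i `&` F)) => //= q /hG [p Fp <-].
    have [i _ Fip] := hFi p Fp; exists i => //; exists p => //.
  rewrite -nneseriesZl; last by move=> i _; exact: ppre_ge0.
  apply: lee_nneseries; first by move=> i _ _; exact: ppre_ge0.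
  move=> i _; apply: (@le_trans _ _ ((powR L s)%:E * packing_premeasure s (Fi i `&` F))).
    apply: ppre_img => //; [by move=> p q [_ Fp] [_ Fq]; exact: hL | by move=> z].
  apply: lee_wpmul2l; first by rewrite lee_fin powR_ge0.
  by apply: ppre_mono => z [].
by rewrite hs mule0.
Qed.

Lemma adim_le (R : realType) (phi : R * R -> R * R) (L : R) (F G : set (R * R)) :
  (1 <= L)%R ->
  (forall p q, F p -> F q -> (edist (phi p) (phi q) <= L * edist p q)%R) ->
  (forall p q, F p -> F q -> (edist p q <= L * edist (phi p) (phi q))%R) ->
  G `<=` phi @` F -> assouad_dim G <= assouad_dim F.
Proof.
move=> L1 hL hL' hG; have L0 : (0 < L)%R by apply: lt_le_trans L1.
apply: ereal_inf_le_tmp; apply: image_subset => a [a0 [C [C0 hC]]].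
split => //; exists (C * powR (L * L) a)%R; split.
  by rewrite mulr_gt0 // powR_gt0 // mulr_gt0.
move=> r Rr r0 rR y Gy.
have Rr0 : (0 <= Rr)%R by exact: ltW (lt_trans r0 rR).
have [x Fx yx] := hG y Gy.
have hsub : cball2 y Rr `&` G `<=` phi @` (cball2 x (L * Rr) `&` F).
  move=> q [/= yq /hG [p Fp pq]]; exists p => //; split => //=.
  apply: le_trans (hL' _ _ Fx Fp) _; rewrite yx pq ler_pM2l //.
apply: le_trans (@covnum_img _ phi L r _ _ L0 _ hsub) _.
  by move=> p q [_ Fp] [_ Fq]; exact: hL.
have rL0 : (0 < r / L)%R by rewrite divr_gt0.
have rLR : (r / L < L * Rr)%R.
  apply: (@le_lt_trans _ _ r).
    by rewrite ler_pdivrMr // ler_peMr // ltW.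
  by apply: (lt_le_trans rR); rewrite ler_peMl.
apply: (le_trans (hC _ _ rL0 rLR x Fx)).
have -> : (L * Rr / (r / L) = (L * L) * (Rr / r))%R.
  by field; rewrite !gt_eqF.
rewrite lee_fin powRM; [by rewrite mulrA | by rewrite mulr_ge0 // ltW | by rewrite divr_ge0 // ltW].
Qed.

Lemma inf_nat (R : realType) (S : set nat) :
  ereal_inf [set ((k%:R)%:E : \bar R) | k in S] = +oo \/
  exists k : nat, ereal_inf [set ((k%:R)%:E : \bar R) | k in S] = (k%:R)%:E.
Proof.
have [->|/set0P [k0 Sk0]] := eqVneq S set0.
  by left; rewrite image_set0 ereal_inf0.
right.
have hex : exists k, `[< S k >] by exists k0; apply/asboolP.
case: (ex_minnP hex) => m /asboolP Sm mmin; exists m.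
apply/eqP; rewrite eq_le; apply/andP; split.
  by apply: ereal_inf_lbound; exists m.
apply: le_ereal_inf_tmp => _ [k Sk <-]; rewrite lee_fin ler_nat.
by apply: mmin; apply/asboolP.
Qed.

Lemma ln_nat_ge0 (R : realType) (k : nat) : (0 <= ln (k%:R : R))%R.
Proof.
case: k => [|k]; first by rewrite ln0.
by apply: ln_ge0; rewrite ler1n.
Qed.

Lemma ln_nat_le (R : realType) (j k : nat) : (j <= k)%N ->
  (ln (j%:R : R) <= ln (k%:R : R))%R.
Proof.
case: j => [|j] jk; first by rewrite ln0 // ln_nat_ge0.
rewrite ler_ln ?posrE ?ltr0n //; last by apply: leq_trans jk.
by rewrite ler_nat.
Qed.

Lemma covnum_cases (R : realType) (d : R) (A : set (R * R)) :
  covnum d A = +oo \/ exists k : nat, covnum d A = (k%:R)%:E.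
Proof. exact: inf_nat. Qed.

Lemma eps_le (R : realType) (x y : \bar R) :
  (forall e : R, (0 < e)%R -> x <= (1 + e)%:E * y) -> x <= y.
Proof.
move=> h; case: y h => [u| |] h; last 2 first.
- exact: leey.
- by have := h 1%R ltr01; rewrite gt0_muleNy // lte_fin addr_gt0.
case: x h => [v| |] h; last 2 first.
- by have := h 1%R ltr01.
- exact: leNye.
rewrite lee_fin; have [u0|u0] := lerP u 0.
  have := h 1%R ltr01; rewrite -EFinM lee_fin => hv.
  by apply: le_trans hv _; nra.
apply/ler_addgt0Pr => e e0.
have := h (e / u)%R (divr_gt0 e0 u0); rewrite -EFinM lee_fin mulrDl mul1r.
by rewrite divfK // gt_eqF.
Qed.

Lemma small_d (R : realType) (L e : R) : (1 <= L)%R -> (0 < e)%R ->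
  exists2 e0 : R, (0 < e0)%R & forall d : R, (0 < d < e0)%R ->
    (d < 1)%R /\ (- ln (d / L) <= (1 + e) * (- ln d))%R.
Proof.
move=> L1 e0; have L0 : (0 < L)%R by apply: lt_le_trans L1.
have lL : (0 <= ln L)%R by exact: ln_ge0.
exists (expR (- ln L / e)); first exact: expR_gt0.
move=> d /andP[d0 de].
have hd : (ln d < - ln L / e)%R.
  by rewrite -(expRK (- ln L / e)%R) ltr_ln ?posrE ?expR_gt0.
split.
  apply: lt_le_trans de _; rewrite -expR0 ler_expR.
  by rewrite mulNr oppr_le0 divr_ge0 // ltW.
rewrite lnM ?posrE ?invr_gt0 // lnV ?posrE //.
have : (ln d * e < - ln L)%R by rewrite -ltr_pdivlMr.
nra.
Qed.

Lemma ratio_le (R : realType) (L e d : R) (A B : set (R * R)) :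
  (1 <= L)%R -> (0 < e)%R -> (0 < d)%R -> (d < 1)%R ->
  (- ln (d / L) <= (1 + e) * (- ln d))%R ->
  covnum d B <= covnum (d / L)%R A ->
  box_ratio d B <= (1 + e)%:E * box_ratio (d / L)%R A.
Proof.
move=> L1 e0 d0 d1 hc hN; have L0 : (0 < L)%R by apply: lt_le_trans L1.
have ld : (0 < - ln d)%R by rewrite oppr_gt0 ln_lt0 // d0.
have ldL : (0 < - ln (d / L))%R.
  rewrite oppr_gt0 ln_lt0 // divr_gt0 //=; apply: (@le_lt_trans _ _ d) => //.
  by rewrite ler_pdivrMr // ler_peMr // ltW.
rewrite /box_ratio; case: (covnum_cases (d / L)%R A) => [-> | [k Ek]].
  by rewrite gt0_muley ?leey // lte_fin addr_gt0.
rewrite Ek; move: hN; rewrite Ek.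
case: (covnum_cases d B) => [-> //| [j ->]].
rewrite lee_fin ler_nat => jk; rewrite -EFinM lee_fin.
have hjk := ln_nat_le R jk; have hk := ln_nat_ge0 R k.
apply: (@le_trans _ _ (ln (k%:R) / - ln d)%R).
  by rewrite ler_pM2r ?invr_gt0.
rewrite ler_pdivrMr //.
have hkb : ((ln (k%:R : R) / - ln (d / L)) * - ln (d / L) = ln (k%:R : R))%R.
  by rewrite divfK // gt_eqF.
have t0 : (0 <= ln (k%:R : R) / - ln (d / L))%R by rewrite divr_ge0 // ltW.
move: hkb t0 hc ld ldL.
set K := ln (k%:R : R); set a := (- ln d)%R; set b := (- ln (d / L))%R.
set t := (K / b)%R => hkb t0 hc ld ldL.
rewrite -hkb; nra.
Qed.

Lemma ubd_le (R : realType) (phi : R * R -> R * R) (L : R) (F G : set (R * R)) :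
  (1 <= L)%R ->
  (forall p q, F p -> F q -> (edist (phi p) (phi q) <= L * edist p q)%R) ->
  G `<=` phi @` F -> upper_box_dim G <= upper_box_dim F.
Proof.
move=> L1 hL hG; have L0 : (0 < L)%R by apply: lt_le_trans L1.
apply: eps_le => eps eps0.
have [e0 e00 he0] := small_d L1 eps0.
have p0 : (0 < 1 + eps)%R by rewrite addr_gt0.
rewrite {2}/upper_box_dim -ereal_inf_pZl //.
apply: le_ereal_inf_tmp => _ [_ [e /= e_pos <-] <-].
apply: ge_ereal_inf; exists (ereal_sup [set box_ratio d G | d in [set d | (0 < d < Order.min e e0)%R]]).
  by exists (Order.min e e0) => //=; rewrite lt_min e_pos e00.
apply: ge_ereal_sup => _ [d /= /andP[d0 dm] <-].
move: dm; rewrite lt_min => /andP[de de0].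
have [d1 hc] := he0 d (introT andP (conj d0 de0)).
apply: le_trans (ratio_le L1 eps0 d0 d1 hc (@covnum_img _ phi L d F G L0 hL hG)) _.
apply: lee_wpmul2l; first by rewrite lee_fin ltW.
apply: ereal_sup_ubound; exists (d / L)%R => //=.
rewrite divr_gt0 //=; apply: (@le_lt_trans _ _ d) => //.
by rewrite ler_pdivrMr // ler_peMr // ltW.
Qed.

Lemma lbd_le (R : realType) (phi : R * R -> R * R) (L : R) (F G : set (R * R)) :
  (1 <= L)%R ->
  (forall p q, F p -> F q -> (edist (phi p) (phi q) <= L * edist p q)%R) ->
  G `<=` phi @` F -> lower_box_dim G <= lower_box_dim F.
Proof.
move=> L1 hL hG; have L0 : (0 < L)%R by apply: lt_le_trans L1.
apply: eps_le => eps eps0.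
have [e0 e00 he0] := small_d L1 eps0.
have p0 : (0 < 1 + eps)%R by rewrite addr_gt0.
rewrite /lower_box_dim -ereal_sup_pZl //.
apply: ge_ereal_sup => _ [e /= e_pos <-].
set e2 := Order.min e e0.
have e20 : (0 < e2)%R by rewrite lt_min e_pos e00.
apply: le_ereal_sup_tmp.
exists ((1 + eps)%:E * ereal_inf [set box_ratio d F | d in [set d | (0 < d < e2 / L)%R]]).
  exists (ereal_inf [set box_ratio d F | d in [set d | (0 < d < e2 / L)%R]]) => //.
  by exists (e2 / L)%R => //=; rewrite divr_gt0.
rewrite -ereal_inf_pZl //.
apply: le_ereal_inf_tmp => _ [_ [d /= /andP[d0 dL] <-] <-].
have Ld0 : (0 < L * d)%R by rewrite mulr_gt0.
have Lde2 : (L * d < e2)%R by rewrite mulrC -ltr_pdivlMr.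
move: (Lde2); rewrite lt_min => /andP[Lde Lde0].
apply: ge_ereal_inf; exists (box_ratio (L * d)%R G).
  by exists (L * d)%R => //=; rewrite Ld0 Lde.
have [d1 hc] := he0 (L * d)%R (introT andP (conj Ld0 Lde0)).
have := ratio_le L1 eps0 Ld0 d1 hc (@covnum_img _ phi L (L * d)%R F G L0 hL hG).
by rewrite mulrC mulfK // gt_eqF.
Qed.

Lemma edist_K (R : realType) (a b b' K : R) : (1 <= K)%R -> (`|b'| <= K * `|b|)%R ->
  (Num.sqrt (a ^+ 2 + b' ^+ 2) <= K * Num.sqrt (a ^+ 2 + b ^+ 2))%R.
Proof.
move=> K1 hb; have K0 : (0 <= K)%R by apply: le_trans K1.
rewrite -(ger0_norm K0) -sqrtr_sqr -sqrtrM ?sqr_ge0 // ler_sqrt; last first.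
  by rewrite mulr_ge0 ?sqr_ge0 // addr_ge0 ?sqr_ge0.
have h1 : (b' ^+ 2 <= (K * `|b|) ^+ 2)%R.
  by rewrite -real_normK ?num_real // ler_pXn2r ?nnegrE ?mulr_ge0.
rewrite exprMn real_normK ?num_real // in h1.
have h2 : (a ^+ 2 <= K ^+ 2 * a ^+ 2)%R.
  rewrite ler_peMl ?sqr_ge0 //; rewrite -(expr1n _ 2) ler_pXn2r ?nnegrE //.
rewrite mulrDr; exact: lerD.
Qed.

Lemma graph_le (R : realType) (f g : R -> R) (K : R) : (1 <= K)%R ->
  (forall x y, (0 <= x <= 1)%R -> (0 <= y <= 1)%R -> (`|g x - g y| <= K * `|f x - f y|)%R) ->
  (forall x y, (0 <= x <= 1)%R -> (0 <= y <= 1)%R -> (`|f x - f y| <= K * `|g x - g y|)%R) ->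
  [/\ upper_box_dim (graph01 g) <= upper_box_dim (graph01 f),
      lower_box_dim (graph01 g) <= lower_box_dim (graph01 f),
      packing_dim (graph01 g) <= packing_dim (graph01 f),
      hausdorff_dim (graph01 g) <= hausdorff_dim (graph01 f) &
      assouad_dim (graph01 g) <= assouad_dim (graph01 f)].
Proof.
move=> K1 h1 h2; have K0 : (0 < K)%R by apply: lt_le_trans K1.
pose phi := fun p : R * R => (p.1, g p.1).
have hL : forall p q, graph01 f p -> graph01 f q ->
    (edist (phi p) (phi q) <= K * edist p q)%R.
  move=> [x u] [y v] [/= hx ->] [/= hy ->]; rewrite /edist /=.
  exact: edist_K K1 (h1 _ _ hx hy).
have hL' : forall p q, graph01 f p -> graph01 f q ->
    (edist p q <= K * edist (phi p) (phi q))%R.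
  move=> [x u] [y v] [/= hx ->] [/= hy ->]; rewrite /edist /=.
  exact: edist_K K1 (h2 _ _ hx hy).
have hG : graph01 g `<=` phi @` graph01 f.
  move=> [x w] [/= hx ->]; exists (x, f x) => //.
split.
- exact: ubd_le K1 hL hG.
- exact: lbd_le K1 hL hG.
- exact: pdim_le K0 hL hG.
- exact: hdim_le K0 hL hG.
- exact: adim_le K1 hL hL' hG.
Qed.

Local Close Scope ereal_scope.
Local Open Scope ring_scope.

Lemma pow_bounds (R : realType) (a b m M : R) (n : nat) : (0 < n)%N -> 0 < m ->
  m <= a <= M -> m <= b <= M ->
  n%:R * m ^+ n.-1 * `|a - b| <= `|a ^+ n - b ^+ n| /\
  `|a ^+ n - b ^+ n| <= n%:R * M ^+ n.-1 * `|a - b|.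
Proof.
move=> n0 m0 /andP[ma aM] /andP[mb bM].
have a0 : 0 <= a by apply: le_trans (ltW m0) ma.
have b0 : 0 <= b by apply: le_trans (ltW m0) mb.
have M0 : 0 <= M by apply: le_trans a0 aM.
rewrite subrXX normrM (mulrC `|a - b|).
set S := \sum_(i < n) _.
have hS1 : n%:R * m ^+ n.-1 <= S.
  rewrite -[n in n%:R]card_ord mulr_natl -sumr_const /S.
  apply: ler_sum => i _.
  have -> : m ^+ n.-1 = m ^+ (n.-1 - i) * m ^+ i.
    by rewrite -exprD subnK // -ltnS prednK.
  have m0' := ltW m0.
  by apply: ler_pM; rewrite ?exprn_ge0 //; apply: lerXn2r; rewrite // nnegrE.
have hS2 : S <= n%:R * M ^+ n.-1.
  rewrite -[n in n%:R]card_ord mulr_natl -sumr_const /S.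
  apply: ler_sum => i _.
  have -> : M ^+ n.-1 = M ^+ (n.-1 - i) * M ^+ i.
    by rewrite -exprD subnK // -ltnS prednK.
  by apply: ler_pM; rewrite ?exprn_ge0 //; apply: lerXn2r; rewrite // nnegrE.
have S0 : 0 <= S by apply: le_trans hS1; rewrite mulr_ge0 // exprn_ge0 // ltW.
rewrite (ger0_norm S0); split.
  by rewrite ler_wpM2r.
by rewrite ler_wpM2r.
Qed.

Lemma sign_const (R : realType) (f : R -> R) :
  {within `[0, 1], continuous f} ->
  (forall x : R, 0 <= x <= 1 -> f x != 0) ->
  forall x y : R, 0 <= x <= 1 -> 0 <= y <= 1 -> 0 < f x * f y.
Proof.
move=> hf hnz.
have key : forall x y : R, 0 <= x -> x <= y -> y <= 1 -> ~ (f x * f y < 0).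
  move=> x y x0 xy y1 hneg.
  have sub : `[x, y] `<=` `[0, 1].
    move=> z; rewrite /= !in_itv /= => /andP[xz zy].
    by rewrite (le_trans x0 xz) (le_trans zy y1).
  have hm : Order.min (f x) (f y) <= 0 <= Order.max (f x) (f y).
    rewrite ge_min le_max.
    have [fx0|fx0] := lerP (f x) 0.
      have : 0 <= f y by nra.
      by move=> ->; rewrite ?orbT ?fx0.
    have : f y <= 0 by nra.
    by move=> ->; rewrite ?orbT ?(ltW fx0).
  have [c cxy fc] := @IVT _ f x y 0 xy (continuous_subspaceW sub hf) hm.
  have hc : 0 <= c <= 1 by move: (sub c cxy); rewrite /= in_itv.
  by move: (hnz c hc); rewrite fc eqxx.
move=> x y hx hy.
have fx := hnz x hx; have fy := hnz y hy.
have hne : f x * f y != 0 by rewrite mulf_neq0.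
rewrite lt_neqAle eq_sym hne /=; rewrite leNgt; apply/negP => hneg.
have /andP[x0 x1] := hx; have /andP[y0 y1] := hy.
have [xy|yx] := lerP x y.
  exact: key x y x0 xy y1 hneg.
by apply: (key y x y0 (ltW yx) x1); rewrite mulrC.
Qed.

Lemma f_bounds (R : realType) (f : R -> R) :
  {within `[0, 1], continuous f} ->
  (forall x : R, 0 <= x <= 1 -> f x != 0) ->
  exists m M : R, 0 < m /\ forall x, 0 <= x <= 1 -> m <= `|f x| <= M.
Proof.
move=> hf hnz.
have [c1 c1i hc1] := @EVT_min _ f 0 1 ler01 hf.
have [c2 c2i hc2] := @EVT_max _ f 0 1 ler01 hf.
move: (c1i) (c2i); rewrite !in_itv /= => c1i' c2i'.
have s := sign_const hf hnz.
exists (Order.min `|f c1| `|f c2|), (Order.max `|f c1| `|f c2|); split.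
  by rewrite lt_min !normr_gt0 !hnz.
move=> x hx.
have x1 : f c1 <= f x by apply: hc1; rewrite in_itv.
have x2 : f x <= f c2 by apply: hc2; rewrite in_itv.
have p1 := s c1 x c1i' hx; have p2 := s x c2 hx c2i'.
rewrite ge_min le_max.
have [fx0|fx0] := ltrP 0 (f x).
  have f10 : 0 < f c1 by rewrite -(pmulr_lgt0 _ fx0).
  have f20 : 0 < f c2 by rewrite -(pmulr_rgt0 _ fx0).
  rewrite !gtr0_norm //; apply/andP; split; apply/orP.
    by left.
  by right.
have fx0' : f x < 0 by rewrite lt_neqAle fx0 hnz.
have f10 : f c1 < 0 by rewrite -(nmulr_lgt0 _ fx0').
have f20 : f c2 < 0 by rewrite -(nmulr_rgt0 _ fx0').
rewrite !ltr0_norm //; apply/andP; split; apply/orP.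
  by right; rewrite lerN2.
by left; rewrite lerN2.
Qed.

Lemma negsub (R : realDomainType) (a b : R) : `|- a - - b| = `|a - b|.
Proof. by rewrite -opprD normrN. Qed.

Lemma negpow (R : realDomainType) (a b : R) n :
  `|(- a) ^+ n - (- b) ^+ n| = `|a ^+ n - b ^+ n|.
Proof. by rewrite (exprNn a) (exprNn b) -mulrBr normrM normrX normrN1 expr1n mul1r. Qed.

Lemma kfin1 (R : realFieldType) (A B c1 c2 : R) : 0 < c1 -> 0 <= c2 -> c1 * A <= B -> 0 <= B ->
  A <= (1 + c2 + c1^-1) * B.
Proof.
move=> c10 c20 k1 B0.
have h : A <= c1^-1 * B by rewrite ler_pdivlMl.
apply: le_trans h _; rewrite ler_wpM2r //.
have := invr_ge0 c1; rewrite (ltW c10) => ?; lra.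
Qed.

Lemma kfin2 (R : realFieldType) (A B c1 c2 : R) : 0 < c1 -> 0 <= c2 -> B <= c2 * A -> 0 <= A ->
  B <= (1 + c2 + c1^-1) * A.
Proof.
move=> c10 c20 k1 B0.
apply: le_trans k1 _; rewrite ler_wpM2r //.
have := invr_ge0 c1; rewrite (ltW c10) => ?; lra.
Qed.

Lemma lip_const (R : realType) (f : R -> R) (n : nat) :
  {within `[0, 1], continuous f} ->
  (forall x : R, 0 <= x <= 1 -> f x != 0) -> (0 < n)%N ->
  exists K : R, 1 <= K /\
    (forall x y, 0 <= x <= 1 -> 0 <= y <= 1 ->
      `|f x ^+ n - f y ^+ n| <= K * `|f x - f y|) /\
    (forall x y, 0 <= x <= 1 -> 0 <= y <= 1 ->
      `|f x - f y| <= K * `|f x ^+ n - f y ^+ n|).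
Proof.
move=> hf hnz n0.
have [m [M [m0 hb]]] := f_bounds hf hnz.
have s := sign_const hf hnz.
have M0 : 0 <= M.
  have /andP[h1 h2] := hb 0 (introT andP (conj (lexx 0) ler01)).
  exact: le_trans (ltW m0) (le_trans h1 h2).
set c1 := n%:R * m ^+ n.-1; set c2 := n%:R * M ^+ n.-1.
have c10 : 0 < c1 by rewrite mulr_gt0 ?ltr0n // exprn_gt0.
have c20 : 0 <= c2 by rewrite mulr_ge0 // exprn_ge0.
have key : forall x y, 0 <= x <= 1 -> 0 <= y <= 1 ->
    c1 * `|f x - f y| <= `|f x ^+ n - f y ^+ n| /\
    `|f x ^+ n - f y ^+ n| <= c2 * `|f x - f y|.
  move=> x y hx hy; have pxy := s x y hx hy.
  have /andP[mx xM] := hb x hx; have /andP[my yM] := hb y hy.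
  have [fx0|fx0] := ltrP 0 (f x).
    have fy0 : 0 < f y by rewrite -(pmulr_rgt0 _ fx0).
    rewrite (gtr0_norm fx0) in mx xM; rewrite (gtr0_norm fy0) in my yM.
    have hx' : m <= f x <= M by rewrite mx xM.
    have hy' : m <= f y <= M by rewrite my yM.
    by have := pow_bounds n0 m0 hx' hy'.
  have fx0' : f x < 0 by rewrite lt_neqAle fx0 hnz.
  have fy0 : f y < 0 by rewrite -(nmulr_rgt0 _ fx0').
  rewrite (ltr0_norm fx0') in mx xM; rewrite (ltr0_norm fy0) in my yM.
  have hx' : m <= - f x <= M by rewrite mx xM.
  have hy' : m <= - f y <= M by rewrite my yM.
  have := pow_bounds n0 m0 hx' hy'.
  by rewrite negpow negsub.
exists (1 + c2 + c1^-1); split.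
  have := invr_ge0 c1; rewrite (ltW c10) => ?; lra.
split => x y hx hy; have [k1 k2] := key x y hx hy.
  exact: kfin2 c10 c20 k2 (normr_ge0 _).
exact: kfin1 c10 c20 k1 (normr_ge0 _).
Qed.

Theorem mainTheorem4 (R : realType) (f : R -> R)
  (hf : {within `[0, 1], continuous f})
  (hnz : forall x : R, 0 <= x <= 1 -> f x != 0)
  (n : nat) (hn : (0 < n)%N) :
  let g := fun x => f x ^+ n in
  [/\ upper_box_dim (graph01 g) = upper_box_dim (graph01 f),
      lower_box_dim (graph01 g) = lower_box_dim (graph01 f),
      packing_dim (graph01 g) = packing_dim (graph01 f),
      hausdorff_dim (graph01 g) = hausdorff_dim (graph01 f) &
      assouad_dim (graph01 g) = assouad_dim (graph01 f)].
Proof.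
move=> g.
have [K [K1 [h1 h2]]] := lip_const hf hnz hn.
have [a1 a2 a3 a4 a5] := @graph_le R f g K K1 h1 h2.
have [b1 b2 b3 b4 b5] := @graph_le R g f K K1 h2 h1.
by split; apply/eqP; rewrite eq_le; apply/andP; split.
Qed.
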